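(* Let $m<n$ be natural numbers and let $(A;R)\in\mathcal C$. Suppose there is $C\subseteq A$ with $C\le A$, $|C|=n$, $d(C)=n-1$, and every $(n-1)$-element subset of $C$ independent in $PG(A;R)$. Then for every $(B;R')\in\mathcal C_m$, the pregeometry $PG(A;R)$ is not isomorphic to $PG(B;R')$.
   Context: A set system is a pair $(A;R)$ where $R$ is a set of finite non-empty subsets of $A$; for $X\subseteq A$, $R[X]=\{r\in R:r\subseteq X\}$ and $\delta(X)=|X|-|R[X]|$. $\mathcal C$ is the class of finite set systems with $\delta(X)\ge0$ for all $X\subseteq A$, and $\mathcal C_m$ is the class of members of $\mathcal C$ all of whose sets in $R$ have size at most $m$. $X\le A$ means $\delta(X)\le\delta(X')$ for all $X\subseteq X'\subseteq A$. $d(X)=\min\{\delta(Y):X\subseteq Y\subseteq A\}$, $\mathrm{cl}(X)=\{y:d(X\cup\{y\})=d(X)\}$, and $PG(A;R)$ is the pregeometry $(A,\mathrm{cl})$ with rank function $d$. *)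

(* Defs.v *)
From HB Require Import structures.
From mathcomp Require Import all_boot all_order all_algebra.
Set Implicit Arguments. Unset Strict Implicit. Unset Printing Implicit Defensive.
Import Order.TTheory GRing.Theory Num.Theory.

Section SetSystems.
Variable A : finType.
Variable R : {set {set A}}.

Definition Rin (X : {set A}) : {set {set A}} := [set r in R | r \subset X].

Definition delta (X : {set A}) : int := (#|X|%:Z - #|Rin X|%:Z)%R.

Definition inC : Prop := set0 \notin R /\ forall X : {set A}, (0 <= delta X)%R.

Definition inCm (m : nat) : Prop := inC /\ forall r, r \in R -> #|r| <= m.

Definition selfsuff (X : {set A}) : Prop :=
  forall X' : {set A}, X \subset X' -> (delta X <= delta X')%R.

Definition rkd (X : {set A}) : int :=
  \big[Order.min/delta setT]_(Y : {set A} | X \subset Y) delta Y.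

Definition cl (X : {set A}) : {set A} := [set y | rkd (y |: X) == rkd X].

Definition indep (X : {set A}) : Prop := forall x, x \in X -> x \notin cl (X :\ x).
End SetSystems.

Definition PG_iso (A B : finType) (R : {set {set A}}) (R' : {set {set B}}) : Prop :=
  exists f : A -> B, bijective f /\
    forall X : {set A}, f @: cl R X = cl R' (f @: X).

(* Main.v *)
Require Import Defs.
From HB Require Import structures.
From mathcomp Require Import all_boot all_order all_algebra.
From mathcomp Require Import zify.
Import Order.TTheory GRing.Theory Num.Theory.

Module Helpers.
Set Implicit Arguments. Unset Strict Implicit.
Section Gen.
Variable (A : finType) (R : {set {set A}}).
Local Notation d := (rkd R).
Local Notation dl := (delta R).
Local Open Scope ring_scope.
Implicit Types X Y I J K S Z : {set A}.

Lemma rkd_le X Y : X \subset Y -> d X <= dl Y.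
Proof. by move=> sXY; rewrite /rkd; apply: bigmin_le_cond. Qed.

Lemma rkd_ex X : exists2 Y : {set A}, X \subset Y & d X = dl Y.
Proof.
have PT : X \subset setT by apply: subsetT.
case: (@arg_minP _ _ _ setT (fun Y => X \subset Y) (delta R) PT) => Y sXY Ymin.
exists Y => //; apply: le_anti; rewrite rkd_le //=.
by apply/bigmin_geP; split => [|Z /Ymin //]; apply: Ymin.
Qed.

Lemma rkd_mono X Y : X \subset Y -> d X <= d Y.
Proof.
move=> sXY; have [Z sYZ ->] := rkd_ex Y; apply: rkd_le.
exact: subset_trans sYZ.
Qed.

Lemma Rin_mono X Y : X \subset Y -> Rin R X \subset Rin R Y.
Proof.
move=> sXY; apply/subsetP => r; rewrite !inE => /andP[-> /subset_trans]; exact.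
Qed.

Lemma delta_sub X Y : dl (X :|: Y) + dl (X :&: Y) <= dl X + dl Y.
Proof.
have h1 := cardsUI X Y.
have h2 : (#|Rin R X| + #|Rin R Y| <= #|Rin R (X :|: Y)| + #|Rin R (X :&: Y)|)%N.
  rewrite -cardsUI; apply: leq_add; apply: subset_leq_card.
    by rewrite subUset !Rin_mono // ?subsetUl ?subsetUr.
  apply/subsetP => r; rewrite !inE => /andP[/andP[-> h3] /andP[_ h4]].
  by rewrite /= subsetI h3 h4.
rewrite /delta; lia.
Qed.

Lemma rkd_sub X Y : d (X :|: Y) + d (X :&: Y) <= d X + d Y.
Proof.
have [X' sX ->] := rkd_ex X; have [Y' sY ->] := rkd_ex Y.
apply: le_trans (delta_sub X' Y'); apply: lerD; apply: rkd_le.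
  by apply: setUSS.
by apply: setISS.
Qed.

Lemma delta_add1 x Y : dl (x |: Y) <= dl Y + 1.
Proof.
have h1 := cardsU1 x Y.
have h2 : (#|Rin R Y| <= #|Rin R (x |: Y)|)%N.
  by apply: subset_leq_card; apply: Rin_mono; apply: subsetUr.
rewrite /delta; case: (x \in Y) h1 => /= h1; move: h1 h2; set c1 := #|x |: Y|; set c2 := #|Rin R (x |: Y)|; set c3 := #|Rin R Y|; move=> h1 h2; lia.
Qed.

Lemma rkd_add1 x X : d (x |: X) <= d X + 1.
Proof.
have [Y sXY ->] := rkd_ex X.
apply: le_trans (delta_add1 x Y); by apply: rkd_le; apply: setUS.
Qed.

Lemma delta_le_card X : dl X <= (#|X|)%:Z.
Proof. rewrite /delta; lia. Qed.

Lemma rkd_le_card X : d X <= (#|X|)%:Z.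
Proof. exact: le_trans (rkd_le (subxx X)) (delta_le_card X). Qed.

Lemma mem_cl y X : (y \in cl R X) = (d (y |: X) == d X).
Proof. by rewrite inE. Qed.

Lemma sub_cl X : X \subset cl R X.
Proof.
apply/subsetP => x xX; rewrite mem_cl; apply/eqP; congr d.
by apply/setUidPr; rewrite sub1set.
Qed.

Lemma cl_mono I J x : I \subset J -> x \in cl R I -> x \in cl R J.
Proof.
move=> sIJ; rewrite !mem_cl => /eqP e.
have h := rkd_sub J (x |: I).
have e1 : J :|: (x |: I) = x |: J.
  by rewrite setUCA; congr (_ |: _); apply/setUidPl.
have m : d I <= d (J :&: (x |: I)).
  by apply: rkd_mono; rewrite subsetI sIJ subsetUr.
rewrite e1 e in h.
rewrite eq_le (rkd_mono (subsetUr [set x] J)) andbT.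
move: h m; set a := d (x |: J); set b := d (J :&: (x |: I)); set c := d J; set e2 := d I.
move=> h m; lia.
Qed.

Lemma cl_monoS I J : I \subset J -> cl R I \subset cl R J.
Proof. by move=> sIJ; apply/subsetP => x; apply: cl_mono. Qed.

Lemma span_aux k I S : #|S| = k -> S \subset cl R I -> d (I :|: S) = d I.
Proof.
elim: k S => [|k IH] S hk hS.
  by rewrite (cards0_eq hk) setU0.
have [y yS] : exists y, y \in S by apply/card_gt0P; rewrite hk.
have eS : S = y |: (S :\ y) by rewrite setD1K.
have hk' : #|S :\ y| = k by move: hk; rewrite (cardsD1 y S) yS => -[].
have hS' : S :\ y \subset cl R I by apply: subset_trans hS; apply: subD1set.
rewrite -(IH _ hk' hS') {1}eS setUCA.
have : y \in cl R (I :|: (S :\ y)).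
  apply: (cl_mono (subsetUl _ _)); exact: (subsetP hS).
by rewrite mem_cl => /eqP.
Qed.

Lemma rkd_span I S : S \subset cl R I -> d (I :|: S) = d I.
Proof. exact: span_aux. Qed.

Lemma rkd_cl X : d (cl R X) = d X.
Proof. by have := rkd_span (subxx (cl R X)); rewrite (setUidPr (sub_cl X)). Qed.

Lemma cl_cl X : cl R (cl R X) = cl R X.
Proof.
apply/setP => y; apply/idP/idP => hy; last first.
  by rewrite mem_cl; apply/eqP; congr d; apply/setUidPr; rewrite sub1set.
move: hy; rewrite !mem_cl rkd_cl => /eqP e.
rewrite eq_le (rkd_mono (subsetUr [set y] X)) andbT -e.
by apply: rkd_mono; apply: setUS; apply: sub_cl.
Qed.

Lemma flat_delta K : cl R K = K -> dl K = d K.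
Proof.
move=> fK; have [Y sKY e] := rkd_ex K.
suff eY : Y = K by rewrite e eY.
apply/eqP; rewrite eqEsubset sKY andbT; apply/subsetP => y yY.
rewrite -fK mem_cl eq_le (rkd_mono (subsetUr [set y] K)) andbT e.
apply: rkd_le; by rewrite subUset sub1set yY.
Qed.

Lemma cl_flat r : cl R (cl R r) = cl R r.
Proof. exact: cl_cl. Qed.

Definition PA J := #|[set r in R | cl R r == J]|.

Lemma count_flat K : cl R K = K -> #|Rin R K| = (\sum_(J : {set A} | J \subset K) PA J)%N.
Proof.
move=> fK.
rewrite -sum1_card (partition_big (fun r => cl R r) (fun J => J \subset K)); last first.
  move=> r; rewrite inE => /andP[_ srK]; rewrite -fK; exact: cl_monoS.
apply: eq_bigr => J sJK; rewrite sum1dep_card /PA; apply: eq_card => r.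
rewrite !inE; case: (r \in R) => //=.
case e: (cl R r == J); rewrite ?andbF ?andbT //.
move/eqP: e => e; apply: subset_trans (sub_cl r) _; by rewrite e.
Qed.

End Gen.
Section Greedy.
Variable (A : finType) (R : {set {set A}}).
Hypothesis hC : inC R.
Local Notation d := (rkd R).
Local Open Scope ring_scope.
Implicit Types X Y I J K S Z D : {set A}.

Lemma rkd_ge0 X : 0 <= d X.
Proof. have [Y _ ->] := rkd_ex R X; exact: hC.2. Qed.

Lemma greedy X : exists I, [/\ I \subset X, d I = (#|I|)%:Z & X \subset cl R I].
Proof.
have d0 : d set0 = 0.
  apply: le_anti; rewrite rkd_ge0 andbT.
  by have := rkd_le_card R (set0 : {set A}); rewrite cards0.
pose P := fun I : {set A} => (I \subset X) && (d I == (#|I|)%:Z).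
have P0 : P set0 by rewrite /P sub0set d0 cards0 eqxx.
case: (@arg_maxnP _ set0 P (fun I => #|I|) P0) => I /andP[sIX /eqP dI] Imax.
exists I; split => //; apply/subsetP => x xX.
case xI: (x \in I); first exact: (subsetP (sub_cl R I)).
rewrite mem_cl eq_le (rkd_mono R (subsetUr [set x] I)) andbT.
rewrite leNgt; apply/negP => lt.
have a1 := rkd_add1 R x I.
have c1 := cardsU1 x I; rewrite xI /= in c1.
have e : d (x |: I) = (#|x |: I|)%:Z.
  move: lt a1 dI; set u := d (x |: I); set v := d I; move=> lt a1 dI.
  rewrite c1; lia.
have := Imax (x |: I); rewrite /P subUset sub1set xX sIX e eqxx /= => /(_ isT).
rewrite c1; lia.
Qed.

Lemma indep_rank D : indep R D -> d D = (#|D|)%:Z.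
Proof.
move=> hD; have [I [sID dI sDcl]] := greedy D.
suff eID : I = D by rewrite -eID.
apply/eqP; rewrite eqEsubset sID /=; apply/subsetP => x xD.
case xI: (x \in I) => //; exfalso.
apply: (negP (hD x xD)); apply: (cl_mono (I := I)); last exact: (subsetP sDcl x xD).
apply/subsetP => z zI; rewrite in_setD1 (subsetP sID z zI) andbT.
by apply/eqP => ezx; move: xI; rewrite -ezx zI.
Qed.

End Greedy.

Section Iso.
Variables (A B : finType) (R : {set {set A}}) (R' : {set {set B}}) (f : A -> B).
Hypothesis hcl : forall X : {set A}, f @: cl R X = cl R' (f @: X).
Local Open Scope ring_scope.

Lemma rank_le (hC : inC R) (X : {set A}) : rkd R' (f @: X) <= rkd R X.
Proof.
have [I [sIX dI sXcl]] := greedy hC X.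
have s1 : f @: X \subset cl R' (f @: I) by rewrite -hcl; apply: imsetS.
have e := rkd_span s1.
apply: (le_trans (rkd_mono R' (subsetUr (f @: I) (f @: X)))); rewrite e.
apply: (le_trans (rkd_le_card R' (f @: I))).
apply: (@le_trans _ _ (#|I|)%:Z); first by rewrite lez_nat leq_imset_card.
by rewrite -dI; apply: rkd_mono.
Qed.

End Iso.
Lemma imK (T U : finType) (f : T -> U) (g : U -> T) (fK : cancel f g) (X : {set T}) :
  g @: (f @: X) = X.
Proof.
apply/setP => x; apply/imsetP/idP => [[y /imsetP [z zX ->] ->]|xX].
  by rewrite fK.
by exists (f x); [apply: imset_f | rewrite fK].
Qed.

Section Main.
Variables (A B : finType) (R : {set {set A}}) (R' : {set {set B}}) (f : A -> B) (g : B -> A).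
Hypotheses (fK : cancel f g) (gK : cancel g f).
Hypothesis hcl : forall X : {set A}, f @: cl R X = cl R' (f @: X).
Hypotheses (hCA : inC R) (hCB : inC R').
Local Open Scope ring_scope.

Lemma hcl' (Y : {set B}) : g @: cl R' Y = cl R (g @: Y).
Proof. by rewrite -[Y in cl R' Y](imK gK Y) -hcl imK. Qed.

Lemma rank_eq (X : {set A}) : rkd R' (f @: X) = rkd R X.
Proof.
apply: le_anti; rewrite (rank_le hcl hCA X) /=.
by have := rank_le hcl' hCB (f @: X); rewrite imK.
Qed.

Lemma flat_iff (K : {set A}) : (cl R' (f @: K) == f @: K) = (cl R K == K).
Proof.
rewrite -hcl; apply/eqP/eqP => [e|->//]; exact: (imset_inj (can_inj fK) e).
Qed.

Lemma sum_reindex (F : {set B} -> nat) (K : {set A}) :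
  (\sum_(J' : {set B} | J' \subset f @: K) F J' =
   \sum_(J : {set A} | J \subset K) F (f @: J))%N.
Proof.
rewrite (reindex (fun J : {set A} => f @: J)) /=.
  apply: eq_bigl => J; apply/idP/idP => h; last exact: imsetS.
  by rewrite -(imK fK J) -(imK fK K); apply: imsetS.
by exists (fun J' : {set B} => g @: J') => J _; [exact: imK | exact: imK].
Qed.

Lemma step (K : {set A}) :
  (forall J : {set A}, J \proper K -> PA R J = PA R' (f @: J)) -> PA R K = PA R' (f @: K).
Proof.
move=> IH; case fl: (cl R K == K).
  have flB : cl R' (f @: K) = f @: K by apply/eqP; rewrite flat_iff fl.
  move/eqP: fl => fl.
  have eA := count_flat fl; have eB := count_flat flB.
  have dA := flat_delta fl; have dB := flat_delta flB.
  rewrite rank_eq in dB.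
  have cK : #|f @: K| = #|K| := card_imset _ (can_inj fK).
  have eR : #|Rin R K| = #|Rin R' (f @: K)|.
    move: dA dB; rewrite /delta cK.
    set a := #|Rin R K|; set b := #|Rin R' (f @: K)|; set c := #|K|; set e := rkd R K.
    move=> dA dB; lia.
  move: eR; rewrite eA eB sum_reindex (bigD1 K) //= [in X in _ = X -> _](bigD1 K) //=.
  have esum : (\sum_(J : {set A} | (J \subset K) && (J != K)) PA R J =
     \sum_(J : {set A} | (J \subset K) && (J != K)) PA R' (f @: J))%N.
    by apply: eq_bigr => J /andP[sJK nJK]; apply: IH; rewrite properEneq nJK.
  rewrite esum.
  by move/eqP; rewrite eqn_add2r => /eqP.
have fl' : (cl R' (f @: K) == f @: K) = false by rewrite flat_iff fl.
have -> : PA R K = 0%N.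
  apply: eq_card0 => r; rewrite !inE; apply/negbTE/negP => /andP[_ /eqP e].
  by move: fl; rewrite -e cl_cl eqxx.
apply/esym; apply: eq_card0 => r; rewrite !inE; apply/negbTE/negP => /andP[_ /eqP e].
by move: fl'; rewrite -e cl_cl eqxx.
Qed.

Lemma PA_eq (K : {set A}) : PA R K = PA R' (f @: K).
Proof.
move: {2}#|K| (leqnn #|K|) => k; elim: k K => [|k IH] K hK; apply: step => J pJK.
  by have := proper_card pJK; lia.
by apply: IH; have := proper_card pJK; lia.
Qed.

End Main.
End Helpers.
Import Helpers.

Theorem mainTheorem11 (m n : nat) (A : finType) (R : {set {set A}}) :
  m < n ->
  inC R ->
  (exists C : {set A},
      [/\ selfsuff R C, #|C| = n, rkd R C = Posz n.-1 &
          forall D : {set A}, D \subset C -> #|D| = n.-1 -> indep R D]) ->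
  forall (B : finType) (R' : {set {set B}}), inCm R' m -> ~ PG_iso R R'.
Proof.
move=> mn hCA [C [ssC cardC dC indC]] B R' [hCB smallR'] [f [[g fK gK] hcl]].
have pn : n.-1 = (n - 1)%N by rewrite subn1.
have dC' : delta R C = rkd R C.
  have [Y sCY eY] := rkd_ex R C.
  apply: le_anti; rewrite (rkd_le R (subxx C)) andbT eY; exact: ssC.
have c1 : #|Rin R C| = 1%N.
  move: dC'; rewrite dC /delta cardC pn; set a := #|Rin R C|; move=> h; lia.
move/eqP/cards1P: c1 => [r er].
have : r \in Rin R C by rewrite er set11.
rewrite inE => /andP[rR srC].
have erC : r = C.
  apply/eqP; rewrite eqEsubset srC /=; apply/negPn/negP => /subsetPn [x xC xr].
  pose D := C :\ x.
  have sDC : D \subset C := subD1set C x.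
  have cD : #|D| = n.-1.
    by have := cardsD1 x C; rewrite xC cardC pn /=; rewrite -/D; lia.
  have dD := indep_rank hCA (indC D sDC cD).
  have rD : r \in Rin R D.
    rewrite inE rR /=; apply/subsetP => z zr; rewrite in_setD1 (subsetP srC z zr) andbT.
    by apply/eqP => ezx; move: xr; rewrite -ezx zr.
  have pos : (0 < #|Rin R D|)%N by apply/card_gt0P; exists r.
  have := rkd_le R (subxx D); rewrite dD /delta.
  move: pos; set a := #|Rin R D|; set b := #|D|; move=> pos h; lia.
rewrite erC in rR.
pose F := cl R C.
have PF : (0 < PA R F)%N by apply/card_gt0P; exists C; rewrite inE rR eqxx.
have PB : PA R' (f @: F) = 0%N.
  apply: eq_card0 => r'; rewrite !inE; apply/negbTE/negP => /andP[r'R /eqP e].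
  have d1 : rkd R' r' = Posz n.-1.
    by rewrite -rkd_cl e (rank_eq fK gK hcl hCA hCB) rkd_cl dC.
  have h := rkd_le R' (subxx r'); rewrite /delta d1 in h.
  have p : (0 < #|Rin R' r'|)%N by apply/card_gt0P; exists r'; rewrite inE r'R subxx.
  have sm := smallR' r' r'R.
  move: h p sm; rewrite pn; set a := #|Rin R' r'|; set b := #|r'|; move=> h p sm; lia.
have := PA_eq fK gK hcl hCA hCB F; rewrite PB; lia.
Qed.
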